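(* Let $f : \mathbb{R}^{n_1} \times \mathbb{R}^{n_2} \to \mathbb{R}^{n_3}$, $(u,v) \mapsto u * v$, be a bilinear map. Then $Q(f)$ equals the maximal $r$ for which there exist $u_1,\ldots,u_r \in \mathbb{R}^{n_1}$ and $v_1,\ldots,v_r \in \mathbb{R}^{n_2}$ such that $u_1 * v_1, \ldots, u_r * v_r$ are linearly independent modulo the subspace $\langle \{ u_i * v_j \mid 1 \leq i,j \leq r,\ i \neq j\} \rangle_{\mathbb{R}}$.
   Context: For a bilinear map $f : \mathbb{R}^{n_1} \times \mathbb{R}^{n_2} \to \mathbb{R}^{n_3}$, its subrank $Q(f)$ is the largest $r$ such that there exist linear maps $\varphi_1 : \mathbb{R}^r \to \mathbb{R}^{n_1}$, $\varphi_2 : \mathbb{R}^r \to \mathbb{R}^{n_2}$, $\varphi_3 : \mathbb{R}^{n_3} \to \mathbb{R}^r$ with $\varphi_3(f(\varphi_1(a), \varphi_2(b))) = (a_1b_1,\ldots,a_rb_r)$ for all $a,b \in \mathbb{R}^r$. *)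

(* Defs.v *)
From HB Require Import structures.
From mathcomp Require Import all_boot all_order all_algebra.
From mathcomp Require Import reals.
Set Implicit Arguments. Unset Strict Implicit. Unset Printing Implicit Defensive.
Import Order.TTheory GRing.Theory Num.Theory.
Local Open Scope ring_scope.

Definition bilinear_map (R : realType) (n1 n2 n3 : nat)
    (f : 'rV[R]_n1 -> 'rV[R]_n2 -> 'rV[R]_n3) : Prop :=
  (forall v, linear (fun u => f u v)) /\ (forall u, linear (f u)).

(* r is admissible in the definition of the subrank Q(f): there are linear
   maps phi1 : R^r -> R^n1, phi2 : R^r -> R^n2, phi3 : R^n3 -> R^r with
   phi3 (f (phi1 a) (phi2 b)) = (a_1 b_1, ..., a_r b_r) for all a, b. *)
Definition subrank_admissible (R : realType) (n1 n2 n3 : nat)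
    (f : 'rV[R]_n1 -> 'rV[R]_n2 -> 'rV[R]_n3) (r : nat) : Prop :=
  exists (phi1 : 'rV[R]_r -> 'rV[R]_n1) (phi2 : 'rV[R]_r -> 'rV[R]_n2)
         (phi3 : 'rV[R]_n3 -> 'rV[R]_r),
    [/\ linear phi1, linear phi2, linear phi3 &
        forall a b : 'rV[R]_r,
          phi3 (f (phi1 a) (phi2 b)) = \row_(i < r) (a 0 i * b 0 i)].

Definition offdiag_span (R : realType) (n1 n2 n3 r : nat)
    (f : 'rV[R]_n1 -> 'rV[R]_n2 -> 'rV[R]_n3)
    (u : 'I_r -> 'rV[R]_n1) (v : 'I_r -> 'rV[R]_n2) : {vspace 'rV[R]_n3} :=
  <<[seq f (u ij.1) (v ij.2) | ij <- enum [pred ij : 'I_r * 'I_r | ij.1 != ij.2]]>>%VS.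

(* r is admissible in the right-hand characterization: there are u_1..u_r,
   v_1..v_r with u_1*v_1, ..., u_r*v_r linearly independent modulo the
   off-diagonal span W, i.e. sum_i c_i (u_i*v_i) in W implies all c_i = 0. *)
Definition diag_indep_admissible (R : realType) (n1 n2 n3 : nat)
    (f : 'rV[R]_n1 -> 'rV[R]_n2 -> 'rV[R]_n3) (r : nat) : Prop :=
  exists (u : 'I_r -> 'rV[R]_n1) (v : 'I_r -> 'rV[R]_n2),
    forall c : 'I_r -> R,
      (\sum_(i < r) c i *: f (u i) (v i) \in offdiag_span f u v) ->
      forall i, c i = 0.

Definition is_max_nat (P : nat -> Prop) (m : nat) : Prop :=
  P m /\ forall r, P r -> (r <= m)%N.

(* Main.v *)
Require Import Defs.
From HB Require Import structures.
From mathcomp Require Import all_boot all_order all_algebra.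
From mathcomp Require Import reals.
Set Implicit Arguments. Unset Strict Implicit. Unset Printing Implicit Defensive.
Import Order.TTheory GRing.Theory Num.Theory.
Local Open Scope ring_scope.

Section Aux.
Variables (K : pzRingType) (U V : lmodType K) (g : U -> V).
Hypothesis Lg : linear g.

Lemma lin0 : g 0 = 0.
Proof.
have := Lg (-1) 0 0; rewrite scaler0 addr0 scaleN1r => H.
by rewrite addNr in H.
Qed.

Lemma linZ a x : g (a *: x) = a *: g x.
Proof. by have := Lg a x 0; rewrite !addr0 lin0 addr0. Qed.

Lemma linD x y : g (x + y) = g x + g y.
Proof. by have := Lg 1 x y; rewrite !scale1r. Qed.

Lemma lin_sum (I : finType) (a : I -> K) (x : I -> U) :
  g (\sum_i a i *: x i) = \sum_i a i *: g (x i).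
Proof.
apply: (big_rec2 (fun y1 y2 => g y1 = y2)); first exact: lin0.
by move=> i y1 y2 _ <-; rewrite linD linZ.
Qed.
End Aux.

Lemma eq_adm (R : realType) (n1 n2 n3 : nat)
    (f : 'rV[R]_n1 -> 'rV[R]_n2 -> 'rV[R]_n3) (r : nat) :
  bilinear_map f -> subrank_admissible f r <-> diag_indep_admissible f r.
Proof.
move=> [Lf1 Lf2]; split.
- move=> [phi1 [phi2 [phi3 [L1 L2 L3 H]]]].
  exists (fun i => phi1 (delta_mx 0 i)), (fun i => phi2 (delta_mx 0 i)).
  have Hij : forall i j, phi3 (f (phi1 (delta_mx 0 i)) (phi2 (delta_mx 0 j)))
                   = if i == j then delta_mx 0 i else 0.
    move=> i j; rewrite H; apply/rowP => k; rewrite !mxE.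
    case: (eqVneq i j) => [<-|nij]; rewrite ?eqxx ?mxE /=.
      by case: (k == i); rewrite ?mulr1 ?mulr0.
    case: (eqVneq k i) => [->|_]; last by rewrite mul0r.
    by rewrite (negbTE nij) mulr0.
  move=> c Hc.
  have W0 : forall w, w \in offdiag_span f (fun i => phi1 (delta_mx 0 i))
                                          (fun i => phi2 (delta_mx 0 i)) ->
            phi3 w = 0.
    move=> w /coord_span ->; rewrite (lin_sum L3) big1 // => k _.
    set s := map_tuple _ _.
    have : s`_k \in (s : seq _) by rewrite mem_nth // size_tuple.
    move=> /mapP [[i j]]; rewrite mem_enum inE /= => nij ->.
    by rewrite Hij (negbTE nij) scaler0.
  have := W0 _ Hc; rewrite (lin_sum L3) => Hs i.
  have /rowP /(_ i) := Hs; rewrite summxE (bigD1 i) //= big1 ?addr0.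
    by rewrite !mxE Hij !eqxx !mxE !eqxx /= mulr1.
  move=> k nki; have nik : (i == k) = false by rewrite eq_sym (negbTE nki).
  by rewrite !mxE Hij eqxx !mxE nik /= mulr0.
- move=> [u [v H]].
  set W := offdiag_span f u v.
  pose D := [tuple f (u i) (v i) | i < r].
  pose B := vbasis W.
  pose Z := cat_tuple D B.
  have DE : forall i : 'I_r, D`_i = f (u i) (v i) by move=> i; rewrite nth_mktuple.
  have ZD : forall i : 'I_r, Z`_(lshift (\dim W) i) = f (u i) (v i).
    by move=> i; rewrite /= nth_cat size_tuple card_ord ltn_ord; exact: (DE i).
  have ZB : forall k : 'I_(\dim W), Z`_(rshift r k) = B`_k.
    by move=> k; rewrite /= nth_cat size_tuple card_ord ltnNge leq_addr /= addKn.
  have freeZ : free Z.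
    rewrite cat_free (basis_free (vbasisP W)) (span_basis (vbasisP W)) /=.
    apply/andP; split.
      apply/(@freeP _ _ r D) => k Hk i; apply: (H k _ i).
      by rewrite -(eq_bigr _ (fun i _ => congr1 _ (DE i))) Hk mem0v.
    apply/directv_addP/eqP; rewrite -subv0; apply/subvP => x /memv_capP [xD xW].
    rewrite memv0; move: xW; rewrite (@coord_span _ _ r D x xD) => xW.
    have := H (fun i => coord D i x); rewrite -(eq_bigr _ (fun i _ => congr1 _ (DE i))).
    move=> /(_ xW) c0; rewrite big1 // => i _; by rewrite c0 scale0r.
  pose phi3 := fun x : 'rV[R]_n3 => \row_(i < r) coord Z (lshift (\dim W) i) x.
  have L3 : linear phi3.
    by move=> a x y; apply/rowP => i; rewrite !mxE linearP.
  have cW : forall i w, w \in W -> coord Z (lshift (\dim W) i) w = 0.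
    move=> i w /coord_vbasis ->; rewrite linear_sum big1 // => k _.
    by rewrite linearZ /= -ZB coord_free // -val_eqE /= gtn_eqF ?mulr0 // (leq_trans (ltn_ord i) (leq_addr _ _)).
  have cf : forall i j k, coord Z (lshift (\dim W) k) (f (u i) (v j))
                    = if i == j then (i == k)%:R else 0.
    move=> i j k; case: (eqVneq i j) => [<-|nij].
      by rewrite -ZD coord_free // -val_eqE /=.
    apply: cW; apply: memv_span; apply/mapP; exists (i, j) => //.
    by rewrite mem_enum inE.
  exists (fun a : 'rV[R]_r => \sum_i a 0 i *: u i),
         (fun b : 'rV[R]_r => \sum_i b 0 i *: v i), phi3.
  split => //.
  + by move=> a x y; rewrite scaler_sumr -big_split /=; apply: eq_bigr => i _;
       rewrite !mxE scalerDl scalerA.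
  + by move=> a x y; rewrite scaler_sumr -big_split /=; apply: eq_bigr => i _;
       rewrite !mxE scalerDl scalerA.
  + move=> a b; apply/rowP => k; rewrite !mxE.
    set y := \sum_i b 0 i *: v i.
    have cy : forall i, coord Z (lshift (\dim W) k) (f (u i) y)
                        = b 0 i * (i == k)%:R.
      move=> i; rewrite /y (lin_sum (Lf2 _)) linear_sum (bigD1 i) //=.
      rewrite linearZ /= cf eqxx big1 ?addr0 // => j nji.
      by rewrite linearZ /= cf eq_sym (negbTE nji) mulr0.
    rewrite (lin_sum (Lf1 y)) linear_sum (bigD1 k) //=.
    rewrite linearZ /= cy eqxx mulr1 big1 ?addr0 // => i nik.
    by rewrite linearZ /= cy (negbTE nik) !mulr0.
Qed.

Theorem proposition5p1 (R : realType) (n1 n2 n3 : nat)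
    (f : 'rV[R]_n1 -> 'rV[R]_n2 -> 'rV[R]_n3) :
  bilinear_map f ->
  forall m : nat,
    is_max_nat (subrank_admissible f) m <-> is_max_nat (diag_indep_admissible f) m.
Proof.
move=> Hf m; rewrite /is_max_nat; split=> [[Pm Hm]|[Pm Hm]]; split.
- by apply/eq_adm.
- by move=> r /(eq_adm r Hf) /Hm.
- by apply/eq_adm.
- by move=> r /(eq_adm r Hf) /Hm.
Qed.
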